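(* Let $A=(Q,R,F_A)$ be an RNNA, regarded as the coalgebra $c\colon Q\to\mathcal{P}_{\mathsf{ufs}}(1+\mathbb{A}\times Q+[\mathbb{A}]Q)$ with $c(q)=\{*:q\in F_A\}\cup\{(a,q'):q\xrightarrow{a}q'\}\cup\{\langle a\rangle q': q\xrightarrow{\mathord{|}a}q'\}$. Let $\mathsf{tr}_c\colon Q\to\mathcal{P}_{\mathsf{ufs}}(\overline{\mathbb{A}}^*/{=_\alpha})$ be the unique morphism in $\mathrm{Kl}(\mathcal{P}_{\mathsf{ufs}})$ from $(Q,c)$ to the terminal $\overline{F}$-coalgebra $(\overline{\mathbb{A}}^*/{=_\alpha},J\iota^{-1})$, i.e. the unique equivariant map with $J\iota^{-1}\bullet\mathsf{tr}_c=\overline{F}\mathsf{tr}_c\bullet c$. Then for every state $q\in Q$, $\mathsf{tr}_c(q)$ is the bar language accepted by $q$.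
   Context: Fix a countably infinite set $\mathbb{A}$ of names; $\mathsf{Nom}$ is the category of nominal sets and equivariant maps; $\mathrm{supp}(x)$ is the least finite support, $a\#x$ means $a\notin\mathrm{supp}(x)$. $[\mathbb{A}]X=(\mathbb{A}\times X)/\sim$ with $(a,x)\sim(b,y)$ iff $(a\,c)\cdot x=(b\,c)\cdot y$ for fresh $c$; classes $\langle a\rangle x$. $\mathcal{P}_{\mathsf{ufs}}X$ is the set of uniformly finitely supported subsets ($\bigcup_{x\in A}\mathrm{supp}(x)$ finite), a monad with unit $x\mapsto\{x\}$ and multiplication union; $\mathrm{Kl}(\mathcal{P}_{\mathsf{ufs}})$ has equivariant maps $X\to\mathcal{P}_{\mathsf{ufs}}Y$ as morphisms, composed by $g\bullet f(x)=\bigcup_{y\in f(x)}g(y)$, and $Jf(x)=\{f(x)\}$. $FX=1+\mathbb{A}\times X+[\mathbb{A}]X$ with $1=\{*\}$, and $\overline{F}$ its canonical extension: for $f\colon X\to\mathcal{P}_{\mathsf{ufs}}Y$, $\overline{F}f( * )=\{*\}$, $\overline{F}f(a,x)=\{(a,y):y\in f(x)\}$, $\overline{F}f(\langle a\rangle x)=\{\langle a\rangle y: y\in f(x)\}$. Bar strings are words over $\overline{\mathbb{A}}=\mathbb{A}\cup\{\mathord{|}a:a\in\mathbb{A}\}$; $=_\alpha$ is the least equivalence with $x\,\mathord{|}a\,v=_\alpha x\,\mathord{|}b\,w$ whenever $\langle a\rangle v=\langle b\rangle w$ (i.e. $a=b,v=w$, or $b\#v$ and $(a\,b)\cdot v=w$);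 $[w]_\alpha$ its classes. $\iota( * )=[\varepsilon]_\alpha$, $\iota(a,[w]_\alpha)=[aw]_\alpha$, $\iota(\langle a\rangle[w]_\alpha)=[\mathord{|}a\,w]_\alpha$ is the initial $F$-algebra, and $(\overline{\mathbb{A}}^*/{=_\alpha},J\iota^{-1})$ is the terminal $\overline{F}$-coalgebra. An RNNA $(Q,R,F_A)$ consists of an orbit-finite nominal set $Q$, an equivariant relation $R\subseteq Q\times\overline{\mathbb{A}}\times Q$ (write $q\xrightarrow{\sigma}q'$) and an equivariant set $F_A\subseteq Q$ of final states, such that (a) if $q\xrightarrow{\mathord{|}a}q'$ and $\langle a\rangle q'=\langle b\rangle q''$ then $q\xrightarrow{\mathord{|}b}q''$, and (b) for each $q$ the sets $\{(a,q'):q\xrightarrow{a}q'\}$ and $\{\langle a\rangle q':q\xrightarrow{\mathord{|}a}q'\}$ are finite. $q$ accepts $w=\sigma_1\cdots\sigma_n\in\overline{\mathbb{A}}^*$ if there is a run $q\xrightarrow{\sigma_1}q_1\cdots\xrightarrow{\sigma_n}q_n$ with $q_n$ final; the bar language accepted by $q$ is $\{[w]_\alpha: q\text{ accepts }w\}$. *)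

(* Defs.v *)
From Stdlib Require Import List Arith Lia Relations ClassicalEpsilon.
Import ListNotations.
Set Implicit Arguments.

Definition atom := nat.

Record perm := Perm {
  pf : atom -> atom;
  pg : atom -> atom;
  pgf : forall a, pg (pf a) = a;
  pfg : forall a, pf (pg a) = a;
  pfin : exists l : list atom, forall a, ~ In a l -> pf a = a }.

Definition pid : perm.
Proof.
  refine (@Perm (fun a => a) (fun a => a) (fun a => eq_refl) (fun a => eq_refl) _).
  exists nil; auto.
Defined.

Definition pcomp (p q : perm) : perm.
Proof.
  refine (@Perm (fun a => pf p (pf q a)) (fun a => pg q (pg p a)) _ _ _).
  - intro a; rewrite pgf, pgf; reflexivity.
  - intro a; rewrite pfg, pfg; reflexivity.
  - destruct (pfin p) as [lp Hp], (pfin q) as [lq Hq].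
    exists (lp ++ lq); intros a Ha.
    rewrite Hq, Hp; auto; intro; apply Ha; apply in_or_app; auto.
Defined.

Definition swap_fun (a b x : atom) : atom :=
  if Nat.eqb x a then b else if Nat.eqb x b then a else x.

Lemma swap_fun_invol a b x : swap_fun a b (swap_fun a b x) = x.
Proof.
  unfold swap_fun.
  destruct (Nat.eqb_spec x a) as [->|Hxa].
  - destruct (Nat.eqb_spec b a) as [->|Hba]; [reflexivity|].
    destruct (Nat.eqb_spec b b); [reflexivity|lia].
  - destruct (Nat.eqb_spec x b) as [->|Hxb].
    + destruct (Nat.eqb_spec a a); [reflexivity|lia].
    + destruct (Nat.eqb_spec x a); [lia|]. destruct (Nat.eqb_spec x b); [lia|reflexivity].
Qed.

Definition pswap (a b : atom) : perm.
Proof.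
  refine (@Perm (swap_fun a b) (swap_fun a b) (swap_fun_invol a b) (swap_fun_invol a b) _).
  exists [a; b]; intros x Hx; unfold swap_fun.
  destruct (Nat.eqb_spec x a); [subst; simpl in Hx; tauto|].
  destruct (Nat.eqb_spec x b); [subst; simpl in Hx; tauto|reflexivity].
Defined.

Section Nominal.
Variable X : Type.
Variable act : perm -> X -> X.

Definition supports (l : list atom) (x : X) : Prop :=
  forall p, (forall a, In a l -> pf p a = a) -> act p x = x.

Definition supp (x : X) (a : atom) : Prop := forall l, supports l x -> In a l.

Definition fresh (a : atom) (x : X) : Prop := ~ supp x a.

Definition is_nominal : Prop :=
  (forall x, act pid x = x) /\
  (forall p q x, act p (act q x) = act (pcomp p q) x) /\
  (forall x, exists l, supports l x).

Definition orbit_finite : Prop :=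
  exists l : list X, forall x, exists x0 p, In x0 l /\ x = act p x0.

Definition pset_act (p : perm) (S : X -> Prop) : X -> Prop :=
  fun y => exists y', S y' /\ y = act p y'.

Definition ufs (S : X -> Prop) : Prop :=
  exists l : list atom, forall y, S y -> forall a, supp y a -> In a l.

Definition abs_rel (u v : atom * X) : Prop :=
  let (a, x) := u in let (b, y) := v in
  exists c, c <> a /\ c <> b /\ fresh c x /\ fresh c y /\
            act (pswap a c) x = act (pswap b c) y.
End Nominal.

Definition quot (T : Type) (Rl : T -> T -> Prop) : Type :=
  { P : T -> Prop | exists t, P = Rl t }.

Definition cls {T : Type} (Rl : T -> T -> Prop) (t : T) : quot Rl :=
  exist _ (Rl t) (ex_intro _ t eq_refl).

Definition rep {T : Type} {Rl : T -> T -> Prop} (q : quot Rl) : T :=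
  proj1_sig (constructive_indefinite_description _ (proj2_sig q)).

Definition Abs (X : Type) (act : perm -> X -> X) : Type := quot (abs_rel act).
Definition abs {X : Type} (act : perm -> X -> X) (a : atom) (x : X) : Abs act :=
  cls (abs_rel act) (a, x).

Inductive FX (X : Type) (act : perm -> X -> X) : Type :=
| FStar : FX act
| FPair : atom -> X -> FX act
| FAbs  : Abs act -> FX act.
Arguments FStar {X act}.
Arguments FPair {X act} _ _.
Arguments FAbs {X act} _.

(* ---------- Kleisli category of P_ufs (morphisms as relations X -> P Y) ---------- *)
Definition kcomp {X Y Z : Type} (g : Y -> Z -> Prop) (f : X -> Y -> Prop) : X -> Z -> Prop :=
  fun x z => exists y, f x y /\ g y z.

Definition J {X Y : Type} (f : X -> Y) : X -> Y -> Prop := fun x y => y = f x.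

Definition kl_morphism {X Y : Type} (actX : perm -> X -> X) (actY : perm -> Y -> Y)
  (f : X -> Y -> Prop) : Prop :=
  (forall p x, f (actX p x) = pset_act actY p (f x)) /\ (forall x, ufs actY (f x)).

Definition Fbar {X Y : Type} {actX : perm -> X -> X} {actY : perm -> Y -> Y}
  (f : X -> Y -> Prop) (u : FX actX) : FX actY -> Prop :=
  match u with
  | FStar => fun z => z = FStar
  | FPair a x => fun z => exists y, f x y /\ z = FPair a y
  | FAbs t => let (a, x) := rep t in
              fun z => exists y, f x y /\ z = FAbs (abs actY a y)
  end.

Inductive bar : Type := Plain (a : atom) | Bind (a : atom).
Definition bar_act (p : perm) (s : bar) : bar :=
  match s with Plain a => Plain (pf p a) | Bind a => Bind (pf p a) end.
Definition bstr := list bar.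
Definition w_act (p : perm) (w : bstr) : bstr := map (bar_act p) w.

Definition alpha_step (u1 u2 : bstr) : Prop :=
  exists x a v b w, u1 = x ++ Bind a :: v /\ u2 = x ++ Bind b :: w /\
                    abs w_act a v = abs w_act b w.

Definition alpha_eq : bstr -> bstr -> Prop := clos_refl_sym_trans bstr alpha_step.

Definition Lang : Type := quot alpha_eq.
Definition lang_act (p : perm) (l : Lang) : Lang := cls alpha_eq (w_act p (rep l)).

Definition iota (u : FX lang_act) : Lang :=
  match u with
  | FStar => cls alpha_eq nil
  | FPair a l => cls alpha_eq (Plain a :: rep l)
  | FAbs t => let (a, l) := rep t in cls alpha_eq (Bind a :: rep l)
  end.

Definition iota_inv (l : Lang) : FX lang_act :=
  match rep l with
  | nil => FStar
  | Plain a :: w => FPair a (cls alpha_eq w)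
  | Bind a :: w => FAbs (abs lang_act a (cls alpha_eq w))
  end.

Record RNNA := {
  st : Type;
  st_act : perm -> st -> st;
  trans : st -> bar -> st -> Prop;
  final : st -> Prop;
  st_nominal : is_nominal st_act;
  st_orbit_finite : orbit_finite st_act;
  trans_equiv : forall p q s q', trans q s q' ->
      trans (st_act p q) (bar_act p s) (st_act p q');
  final_equiv : forall p q, final q -> final (st_act p q);
  trans_alpha : forall q a q' b q'', trans q (Bind a) q' ->
      abs st_act a q' = abs st_act b q'' -> trans q (Bind b) q'';
  trans_fin_free : forall q, exists l : list (atom * st),
      forall a q', trans q (Plain a) q' -> In (a, q') l;
  trans_fin_bound : forall q, exists l : list (Abs st_act),
      forall a q', trans q (Bind a) q' -> In (abs st_act a q') l }.

Definition rnna_coalg (A : RNNA) (q : st A) : FX (st_act A) -> Prop :=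
  fun z => (z = FStar /\ final A q) \/
           (exists a q', trans A q (Plain a) q' /\ z = FPair a q') \/
           (exists a q', trans A q (Bind a) q' /\ z = FAbs (abs (st_act A) a q')).

Fixpoint accepts (A : RNNA) (q : st A) (w : bstr) : Prop :=
  match w with
  | nil => final A q
  | s :: w' => exists q', trans A q s q' /\ accepts A q' w'
  end.

Definition bar_language (A : RNNA) (q : st A) : Lang -> Prop :=
  fun l => exists w, accepts A q w /\ l = cls alpha_eq w.

(* Main.v *)
Require Import Defs.
From Stdlib Require Import List Arith Lia Relations ClassicalEpsilon FunctionalExtensionality PropExtensionality ProofIrrelevance.
Import ListNotations.

Lemma notin_cons {A} (d a : A) l : ~ In d (a :: l) -> d <> a /\ ~ In d l.
Proof. simpl; intuition. Qed.
Lemma notin_app {A} (d : A) l1 l2 : ~ In d (l1 ++ l2) -> ~ In d l1 /\ ~ In d l2.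
Proof. rewrite in_app_iff; intuition. Qed.
Ltac nin := repeat match goal with
 | H : ~ In _ (_ :: _) |- _ => apply notin_cons in H; destruct H
 | H : ~ In _ (_ ++ _) |- _ => apply notin_app in H; destruct H end.

Lemma perm_ext (p q : perm) : (forall a, pf p a = pf q a) -> (forall a, pg p a = pg q a) -> p = q.
Proof.
  destruct p as [f1 g1 h1 k1 m1], q as [f2 g2 h2 k2 m2]; simpl; intros Hf Hg.
  assert (f1 = f2) by (apply functional_extensionality; auto).
  assert (g1 = g2) by (apply functional_extensionality; auto).
  subst f2 g2.
  rewrite (proof_irrelevance _ h1 h2), (proof_irrelevance _ k1 k2), (proof_irrelevance _ m1 m2).
  reflexivity.
Qed.

Definition pinv (p : perm) : perm.
Proof.
  refine (@Perm (pg p) (pf p) (pfg p) (pgf p) _).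
  destruct (pfin p) as [l Hl]. exists l. intros a Ha.
  rewrite <- (Hl a Ha) at 1. apply pgf.
Defined.

Lemma sw_l a b : swap_fun a b a = b. Proof. unfold swap_fun; rewrite Nat.eqb_refl; auto. Qed.
Lemma sw_r a b : swap_fun a b b = a.
Proof. unfold swap_fun; destruct (Nat.eqb_spec b a); subst; auto; rewrite Nat.eqb_refl; auto. Qed.
Lemma sw_o a b x : x <> a -> x <> b -> swap_fun a b x = x.
Proof. intros; unfold swap_fun; destruct (Nat.eqb_spec x a); [lia|]; destruct (Nat.eqb_spec x b); lia. Qed.
Lemma sw_inj a b x y : swap_fun a b x = swap_fun a b y -> x = y.
Proof. intros H. rewrite <- (swap_fun_invol a b x), <- (swap_fun_invol a b y), H; auto. Qed.
Lemma sw_lemma a c d x : x <> c -> x <> d -> swap_fun c d (swap_fun a c x) = swap_fun a d x.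
Proof.
  intros; unfold swap_fun;
  destruct (Nat.eqb_spec x a); destruct (Nat.eqb_spec x c);
  repeat match goal with |- context [Nat.eqb ?x ?y] => destruct (Nat.eqb_spec x y) end; lia.
Qed.

Lemma fresh_atom (l : list atom) : exists d, ~ In d l.
Proof.
  exists (S (list_sum l)). intro H.
  assert (forall x, In x l -> x <= list_sum l).
  { clear H. induction l; simpl; intros x Hx; [contradiction|].
    destruct Hx; subst; [lia| specialize (IHl x H); lia]. }
  specialize (H0 _ H); lia.
Qed.

Lemma act_inv {X} (act : perm -> X -> X) (Hn : is_nominal act) p x : act (pinv p) (act p x) = x.
Proof.
  destruct Hn as [H1 [H2 _]]. rewrite H2. replace (pcomp (pinv p) p) with pid. apply H1.
  apply perm_ext; simpl; intros; rewrite pgf; auto.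
Qed.

Lemma act_swap_invol {X} (act : perm -> X -> X) (Hn : is_nominal act) a b x :
  act (pswap a b) (act (pswap a b) x) = x.
Proof.
  destruct Hn as [H1 [H2 _]]. rewrite H2. replace (pcomp (pswap a b) (pswap a b)) with pid. apply H1.
  apply perm_ext; simpl; intros; rewrite swap_fun_invol; auto.
Qed.

Lemma supp_equiv {X} (act : perm -> X -> X) (Hn : is_nominal act) p x a :
  supp act x a -> supp act (act p x) (pf p a).
Proof.
  intros H l Hl.
  assert (Hs : supports act (map (pg p) l) x).
  { intros r Hr.
    set (r' := pcomp p (pcomp r (pinv p))).
    assert (E1 : act r' (act p x) = act p x).
    { apply Hl. intros z Hz. unfold r'; simpl. rewrite Hr. apply pfg. apply in_map; auto. }
    pose proof Hn as [H1 [H2 _]].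
    rewrite H2 in E1.
    assert (E2 : pcomp r' p = pcomp p r).
    { apply perm_ext; unfold r'; simpl; intros; rewrite pgf; auto. }
    rewrite E2, <- H2 in E1.
    rewrite <- (act_inv act Hn p (act r x)), E1, act_inv; auto. }
  specialize (H _ Hs). apply in_map_iff in H. destruct H as [z [Hz1 Hz2]]. subst. rewrite pfg; auto.
Qed.

Lemma fresh_of_support {X} (act : perm -> X -> X) l x c :
  supports act l x -> ~ In c l -> fresh act c x.
Proof. intros H Hc Hs. apply Hc, Hs, H. Qed.

Lemma abs_refl {X} (act : perm -> X -> X) a x :
  (exists l, supports act l x) -> abs_rel act (a, x) (a, x).
Proof.
  intros [l Hl]. destruct (fresh_atom (a :: l)) as [d Hd]. nin.
  exists d. repeat split; auto; eapply fresh_of_support; eauto.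
Qed.

Lemma quot_eq {T} {R : T -> T -> Prop} (t1 t2 : quot R) : proj1_sig t1 = proj1_sig t2 -> t1 = t2.
Proof. destruct t1, t2; simpl; intros; subst; f_equal; apply proof_irrelevance. Qed.
Lemma rep_spec {T} {R : T -> T -> Prop} (t : quot R) : proj1_sig t = R (rep t).
Proof. unfold rep. destruct (constructive_indefinite_description _ _); simpl; auto. Qed.
Lemma cls_rep {T} {R : T -> T -> Prop} (t : quot R) : t = cls R (rep t).
Proof. apply quot_eq. rewrite (rep_spec t). reflexivity. Qed.

Lemma rep_abs {X} (act : perm -> X -> X) a x b y :
  rep (abs act a x) = (b, y) -> abs act a x = abs act b y.
Proof.
  intros E. pose proof (rep_spec (abs act a x)) as H. rewrite E in H.
  apply quot_eq. rewrite H. reflexivity.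
Qed.

Lemma abs_eq_rel {X} (act : perm -> X -> X) a x b y :
  abs act a x = abs act b y -> (exists l, supports act l x) -> abs_rel act (b, y) (a, x).
Proof.
  intros E Hs. apply (f_equal (@proj1_sig _ _)) in E. unfold abs, cls in E; simpl in E.
  rewrite <- E. apply abs_refl; auto.
Qed.
Definition batom (s : bar) : atom := match s with Plain a => a | Bind a => a end.
Definition atoms (u : bstr) : list atom := map batom u.
Definition bar_f (f : atom -> atom) (s : bar) : bar :=
  match s with Plain a => Plain (f a) | Bind a => Bind (f a) end.
Definition w_f f (u : bstr) : bstr := map (bar_f f) u.
Lemma w_act_f p u : w_act p u = w_f (pf p) u. Proof. reflexivity. Qed.

Lemma w_f_ext f g u : (forall x, In x (atoms u) -> f x = g x) -> w_f f u = w_f g u.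
Proof. induction u as [|[a|a] u IH]; simpl; intros H; auto; rewrite H, IH; auto. Qed.
Lemma w_f_comp f g u : w_f f (w_f g u) = w_f (fun x => f (g x)) u.
Proof. induction u as [|[a|a] u IH]; simpl; auto; rewrite IH; auto. Qed.
Lemma atoms_w_f f u : atoms (w_f f u) = map f (atoms u).
Proof. induction u as [|[a|a] u IH]; simpl; auto; rewrite IH; auto. Qed.
Lemma w_f_length f u : length (w_f f u) = length u.
Proof. unfold w_f; apply length_map. Qed.

Lemma map_fixed {A} (f : A -> A) u s : map f u = u -> In s u -> f s = s.
Proof. induction u; simpl; [tauto|]. intros H [->|Hin]; injection H; auto. Qed.

Lemma supports_atoms u : supports w_act (atoms u) u.
Proof.
  intros p Hp. induction u as [|[a|a] u IH]; simpl in *; auto;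
  rewrite Hp, IH; auto.
Qed.

Lemma fresh_bstr c u : fresh w_act c u -> ~ In c (atoms u).
Proof.
  intros H Hin. apply H. intros l Hl.
  destruct (in_dec Nat.eq_dec c l) as [|Hc]; auto. exfalso.
  destruct (fresh_atom (c :: l)) as [d Hd]. nin.
  assert (E : w_act (pswap c d) u = u).
  { apply Hl. intros y Hy. simpl. apply sw_o; intro; subst; auto. }
  unfold atoms in Hin. apply in_map_iff in Hin. destruct Hin as [s [Hs1 Hs2]].
  pose proof (map_fixed _ _ _ E Hs2) as F.
  destruct s; simpl in *; subst; injection F; rewrite sw_l; auto.
Qed.

Lemma notin_fresh_bstr c u : ~ In c (atoms u) -> fresh w_act c u.
Proof. intros; eapply fresh_of_support; eauto using supports_atoms. Qed.

Lemma absR_any a u b w : abs_rel w_act (a, u) (b, w) ->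
  forall d, d <> a -> d <> b -> ~ In d (atoms u) -> ~ In d (atoms w) ->
  w_f (swap_fun a d) u = w_f (swap_fun b d) w.
Proof.
  intros [c [Hca [Hcb [Hcu [Hcw E]]]]] d Hda Hdb Hdu Hdw.
  apply fresh_bstr in Hcu, Hcw. rewrite !w_act_f in E; simpl in E.
  transitivity (w_f (swap_fun c d) (w_f (swap_fun a c) u)).
  { rewrite w_f_comp; apply w_f_ext; intros x Hx; symmetry; apply sw_lemma;
    intro; subst; auto. }
  rewrite E, w_f_comp; apply w_f_ext; intros x Hx; apply sw_lemma; intro; subst; auto.
Qed.

Lemma absR_intro a u b w d : d <> a -> d <> b -> ~ In d (atoms u) -> ~ In d (atoms w) ->
  w_f (swap_fun a d) u = w_f (swap_fun b d) w -> abs_rel w_act (a, u) (b, w).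
Proof.
  intros. exists d. repeat split; auto; apply notin_fresh_bstr; auto.
Qed.

Lemma absR_trans a u b v c w : abs_rel w_act (a, u) (b, v) -> abs_rel w_act (b, v) (c, w) ->
  abs_rel w_act (a, u) (c, w).
Proof.
  intros H1 H2. destruct (fresh_atom (a :: b :: c :: atoms u ++ atoms v ++ atoms w)) as [d Hd]. nin.
  apply (absR_intro _ _ _ _ d); auto.
  rewrite (absR_any _ _ _ _ H1 d), (absR_any _ _ _ _ H2 d); auto.
Qed.

Lemma absR_sym a u b w : abs_rel w_act (a, u) (b, w) -> abs_rel w_act (b, w) (a, u).
Proof. intros [c [H1 [H2 [H3 [H4 H5]]]]]. exists c. repeat split; auto. Qed.

Lemma absR_eq a u b w : abs_rel w_act (a, u) (b, w) -> abs w_act a u = abs w_act b w.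
Proof.
  intros H. apply quot_eq. simpl. apply functional_extensionality. intros [c v].
  apply propositional_extensionality. split; intros.
  - eapply absR_trans; eauto using absR_sym.
  - eapply absR_trans; eauto.
Qed.

Lemma abs_rename a u c : ~ In c (atoms u) -> abs_rel w_act (a, u) (c, w_f (swap_fun a c) u).
Proof.
  intros Hc. destruct (fresh_atom (a :: c :: atoms u)) as [d Hd]. nin.
  apply (absR_intro _ _ _ _ d); auto.
  - rewrite atoms_w_f. intro Hin. apply in_map_iff in Hin. destruct Hin as [y [Hy1 Hy2]].
    destruct (Nat.eq_dec y a); [subst; rewrite sw_l in *; auto|].
    rewrite sw_o in Hy1; [subst; auto|auto|intro; subst; auto].
  - rewrite w_f_comp; apply w_f_ext; intros x Hx; symmetry; apply sw_lemma; intro; subst; auto.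
Qed.

(* de Bruijn *)
Fixpoint idx (x : atom) (E : list atom) : option nat :=
  match E with [] => None | y :: E' => if Nat.eqb x y then Some 0 else option_map S (idx x E') end.
Inductive dsym := DFree (a : atom) | DBound (i : nat) | DBind.
Fixpoint db (E : list atom) (w : bstr) : list dsym :=
  match w with
  | [] => []
  | Plain a :: w' => (match idx a E with Some i => DBound i | None => DFree a end) :: db E w'
  | Bind a :: w' => DBind :: db (a :: E) w'
  end.
Fixpoint envx (E : list atom) (x : bstr) : list atom :=
  match x with [] => E | Plain _ :: x' => envx E x' | Bind a :: x' => envx (a :: E) x' end.
Definition dsym_f (f : atom -> atom) (s : dsym) : dsym :=
  match s with DFree a => DFree (f a) | s => s end.
Definition dbmapf f (D : list dsym) := map (dsym_f f) D.

Lemma db_app E x y : db E (x ++ y) = db E x ++ db (envx E x) y.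
Proof. revert E; induction x as [|[a|a] x IH]; intros E; simpl; auto; rewrite IH; auto. Qed.
Lemma envx_app E x y : envx E (x ++ y) = envx (envx E x) y.
Proof. revert E; induction x as [|[a|a] x IH]; intros E; simpl; auto. Qed.
Lemma db_length E u : length (db E u) = length u.
Proof. revert E; induction u as [|[a|a] u IH]; intros E; simpl; auto. Qed.

Lemma idx_map f x E : (forall x y, f x = f y -> x = y) -> idx (f x) (map f E) = idx x E.
Proof.
  intros Hf; induction E as [|a E IH]; simpl; auto.
  destruct (Nat.eqb_spec (f x) (f a)), (Nat.eqb_spec x a); subst; auto.
  - apply Hf in e; contradiction.
  - congruence.
  - rewrite IH; auto.
Qed.

Lemma db_equiv f E u : (forall x y, f x = f y -> x = y) ->
  db (map f E) (w_f f u) = dbmapf f (db E u).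
Proof.
  intros Hf; revert E; induction u as [|[a|a] u IH]; intros E; simpl; auto.
  - rewrite idx_map, IH; auto. destruct (idx a E); auto.
  - rewrite <- IH. reflexivity.
Qed.

Lemma idx_inj a b E i : idx a E = Some i -> idx b E = Some i -> a = b.
Proof.
  revert i; induction E as [|y E IH]; simpl; intros i; [discriminate|].
  destruct (Nat.eqb_spec a y), (Nat.eqb_spec b y); intros H1 H2; subst; auto.
  - destruct (idx b E); simpl in H2; congruence.
  - destruct (idx a E); simpl in H1; congruence.
  - destruct (idx a E) eqn:Ea, (idx b E) eqn:Eb; simpl in *; try congruence.
    injection H1; injection H2; intros; subst. eapply IH; eauto. congruence.
Qed.

Lemma idx_swap a c x F E : ~ In c F -> x <> c ->
  idx (swap_fun a c x) (map (swap_fun a c) F ++ c :: E) = idx x (F ++ a :: E).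
Proof.
  intros HF Hx; induction F as [|y F IH]; simpl.
  - destruct (Nat.eq_dec x a).
    + subst. rewrite sw_l, !Nat.eqb_refl; auto.
    + rewrite sw_o; auto. destruct (Nat.eqb_spec x c), (Nat.eqb_spec x a); try lia; auto.
  - nin. destruct (Nat.eqb_spec x y).
    + subst. rewrite !Nat.eqb_refl; auto.
    + destruct (Nat.eqb_spec (swap_fun a c x) (swap_fun a c y)).
      * apply sw_inj in e; contradiction.
      * rewrite IH; auto.
Qed.

Lemma idx_in x E : In x E -> idx x E <> None.
Proof.
  induction E as [|y E IH]; simpl; [tauto|]. intros [->|H]; [rewrite Nat.eqb_refl; discriminate|].
  destruct (Nat.eqb x y); [discriminate|]. destruct (idx x E); simpl; [discriminate|]. tauto.
Qed.

Lemma db_swap a c E v : forall F, ~ In c F -> ~ In c (atoms v) ->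
  db (F ++ a :: E) v = db (map (swap_fun a c) F ++ c :: E) (w_f (swap_fun a c) v).
Proof.
  induction v as [|[x|x] v IH]; intros F HF Hv; simpl in *; auto.
  - rewrite idx_swap by (auto; intro; subst; tauto). rewrite IH; auto; try tauto.
    destruct (idx x (F ++ a :: E)) eqn:Ei; auto. rewrite sw_o; auto; try (intro; subst; tauto).
    intro; subst. apply (idx_in a (F ++ a :: E)); auto. apply in_or_app; simpl; auto.
  - f_equal. apply (IH (x :: F)); simpl; intuition.
Qed.

Lemma alpha_sound u v : alpha_eq u v -> db [] u = db [] v.
Proof.
  induction 1 as [u v H| | |]; try congruence.
  destruct H as (x & a & v' & b & w & -> & -> & E).
  apply abs_eq_rel in E; [|exists (atoms v'); apply supports_atoms].
  destruct E as [c [Hcb [Hca [Hcw [Hcv E]]]]].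
  apply fresh_bstr in Hcw, Hcv. rewrite !w_act_f in E; simpl in E.
  rewrite !db_app; f_equal; simpl; f_equal.
  pose proof (db_swap a c (envx [] x) v' [] (fun h => h) Hcv) as H1.
  pose proof (db_swap b c (envx [] x) w [] (fun h => h) Hcw) as H2.
  simpl in H1, H2. rewrite H1, H2, E. reflexivity.
Qed.

Lemma alpha_rename x a u c : ~ In c (atoms u) ->
  alpha_eq (x ++ Bind a :: u) (x ++ Bind c :: w_f (swap_fun a c) u).
Proof.
  intros; apply rst_step; exists x, a, u, c, (w_f (swap_fun a c) u); repeat split.
  apply absR_eq; apply abs_rename; auto.
Qed.

Lemma alpha_complete n : forall u v x, length u = n ->
  db (envx [] x) u = db (envx [] x) v -> alpha_eq (x ++ u) (x ++ v).
Proof.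
  induction n; intros u v x Hl Hd.
  - destruct u; [|discriminate]. destruct v as [|[b|b] v]; simpl in Hd.
    + apply rst_refl.
    + destruct (idx _ _); discriminate.
    + discriminate.
  - destruct u as [|s u]; [discriminate|]. injection Hl as Hl.
    destruct v as [|t v]; [destruct s; simpl in Hd; [destruct (idx _ _)|]; discriminate|].
    destruct s as [a|a], t as [b|b]; simpl in Hd.
    + injection Hd as H1 H2. assert (a = b).
      { destruct (idx a _) eqn:Ea, (idx b _) eqn:Eb; try discriminate; injection H1; intros; subst; auto.
        eapply idx_inj; eauto. }
      subst b. specialize (IHn u v (x ++ [Plain a]) Hl).
      rewrite <- !app_assoc in IHn. apply IHn. rewrite envx_app; simpl; auto.
    + destruct (idx a _); discriminate.
    + destruct (idx b _); discriminate.
    + injection Hd as H2.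
      destruct (fresh_atom (atoms u ++ atoms v)) as [c Hc]. nin.
      pose proof (db_swap a c (envx [] x) u [] (fun h => h) H) as H1.
      pose proof (db_swap b c (envx [] x) v [] (fun h => h) H0) as H3.
      simpl in H1, H3.
      specialize (IHn (w_f (swap_fun a c) u) (w_f (swap_fun b c) v) (x ++ [Bind c])).
      rewrite <- !app_assoc in IHn; simpl in IHn.
      eapply rst_trans; [apply alpha_rename; eauto|].
      eapply rst_trans; [apply IHn|].
      * rewrite w_f_length; auto.
      * rewrite envx_app; simpl. rewrite <- H1, <- H3; auto.
      * apply rst_sym, alpha_rename; auto.
Qed.

Lemma alpha_iff u v : alpha_eq u v <-> db [] u = db [] v.
Proof.
  split; [apply alpha_sound|]. intros H. apply (alpha_complete (length u) u v []); auto.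
Qed.
Definition DL (l : Lang) := db [] (rep l).

Lemma cls_eq_db u v : db [] u = db [] v -> cls alpha_eq u = cls alpha_eq v.
Proof.
  intros H. apply quot_eq. simpl. apply functional_extensionality; intro z.
  apply propositional_extensionality. rewrite !alpha_iff, H. tauto.
Qed.

Lemma DL_cls w : DL (cls alpha_eq w) = db [] w.
Proof.
  pose proof (rep_spec (cls alpha_eq w)) as H. unfold cls in H; cbn [proj1_sig] in H.
  assert (alpha_eq (rep (cls alpha_eq w)) w).
  { unfold cls; rewrite <- H. apply rst_refl. }
  apply alpha_iff in H0. unfold DL; auto.
Qed.

Lemma L_ext l1 l2 : DL l1 = DL l2 -> l1 = l2.
Proof.
  intros H. rewrite (cls_rep l1), (cls_rep l2). apply cls_eq_db. exact H.
Qed.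

Lemma DL_act p l : DL (lang_act p l) = dbmapf (pf p) (DL l).
Proof.
  unfold lang_act. rewrite DL_cls, w_act_f.
  apply (db_equiv (pf p) [] (rep l)).
  intros x y E. rewrite <- (pgf p x), <- (pgf p y), E; auto.
Qed.

Lemma lang_support l : supports lang_act (atoms (rep l)) l.
Proof.
  intros p Hp. unfold lang_act. rewrite (supports_atoms (rep l) p Hp).
  symmetry; apply cls_rep.
Qed.

Lemma lang_fresh c l : fresh lang_act c l -> ~ In (DFree c) (DL l).
Proof.
  intros H Hin. apply H. intros s Hs.
  destruct (in_dec Nat.eq_dec c s) as [|Hc]; auto. exfalso.
  destruct (fresh_atom (c :: s)) as [d Hd]. nin.
  assert (E : lang_act (pswap c d) l = l).
  { apply Hs. intros y Hy. simpl. apply sw_o; intro; subst; auto. }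
  apply (f_equal DL) in E. rewrite DL_act in E. simpl in E.
  pose proof (map_fixed _ _ _ E Hin) as F. simpl in F. rewrite sw_l in F.
  injection F; auto.
Qed.

Fixpoint closeA (a : atom) (k : nat) (D : list dsym) : list dsym :=
  match D with
  | [] => []
  | DBind :: D' => DBind :: closeA a (S k) D'
  | DFree x :: D' => (if Nat.eqb x a then DBound k else DFree x) :: closeA a k D'
  | DBound i :: D' => DBound i :: closeA a k D'
  end.

Lemma idx_app_end x F a : idx x (F ++ [a]) =
  match idx x F with Some i => Some i | None => if Nat.eqb x a then Some (length F) else None end.
Proof.
  induction F as [|y F IH]; simpl.
  - destruct (Nat.eqb x a); auto.
  - destruct (Nat.eqb x y); auto. rewrite IH. destruct (idx x F); simpl; auto.
    destruct (Nat.eqb x a); auto.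
Qed.

Lemma db_closeA F a u : db (F ++ [a]) u = closeA a (length F) (db F u).
Proof.
  revert F; induction u as [|[x|x] u IH]; intros F; simpl; auto.
  - rewrite idx_app_end, IH. destruct (idx x F); auto. simpl. destruct (Nat.eqb x a); auto.
  - f_equal. apply (IH (x :: F)).
Qed.

Lemma db_Bind a w : db [] (Bind a :: w) = DBind :: closeA a 0 (db [] w).
Proof. simpl. f_equal. apply (db_closeA [] a w). Qed.

Lemma closeA_length a k D : length (closeA a k D) = length D.
Proof. revert k; induction D as [|[x|i|] D IH]; intros k; simpl; auto. Qed.

Lemma In_closeA x a k D : In (DFree x) (closeA a k D) -> In (DFree x) D /\ x <> a.
Proof.
  revert k; induction D as [|[y|i|] D IH]; intros k; simpl; [tauto| | |].
  - destruct (Nat.eqb_spec y a).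
    + intros [H|H]; [discriminate|]. apply IH in H; tauto.
    + intros [H|H]; [injection H; intros; subst; auto|]. apply IH in H; tauto.
  - intros [H|H]; [discriminate|]. apply IH in H; tauto.
  - intros [H|H]; [discriminate|]. apply IH in H; tauto.
Qed.

Lemma closeA_map a b f k D :
  (forall x, In (DFree x) D -> (x = a -> f x = b) /\ (x <> a -> f x = x /\ x <> b)) ->
  closeA a k D = closeA b k (dbmapf f D).
Proof.
  revert k; induction D as [|[y|i|] D IH]; intros k H; simpl; auto.
  - rewrite IH by (intros; apply H; simpl; auto). f_equal.
    destruct (H y (or_introl eq_refl)) as [H1 H2].
    destruct (Nat.eqb_spec y a).
    + subst. rewrite H1, Nat.eqb_refl; auto.
    + destruct (H2 n) as [-> H3]. destruct (Nat.eqb_spec y b); auto; contradiction.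
  - rewrite IH by (intros; apply H; simpl; auto). auto.
  - rewrite IH by (intros; apply H; simpl; auto). auto.
Qed.

Lemma closeA_swap a c k D : ~ In (DFree c) D ->
  closeA a k D = closeA c k (dbmapf (swap_fun a c) D).
Proof.
  intros Hc. apply closeA_map. intros x Hx. split.
  - intros ->. apply sw_l.
  - intros Hxa. assert (x <> c) by (intro; subst; auto). split; auto. apply sw_o; auto.
Qed.

Lemma L1 a l1 b l2 : abs lang_act a l1 = abs lang_act b l2 ->
  closeA a 0 (DL l1) = closeA b 0 (DL l2).
Proof.
  intros E. apply abs_eq_rel in E; [|exists (atoms (rep l1)); apply lang_support].
  destruct E as [c [Hcb [Hca [Hc2 [Hc1 E]]]]].
  apply (f_equal DL) in E. rewrite !DL_act in E. simpl in E.
  apply lang_fresh in Hc1, Hc2.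
  rewrite (closeA_swap a c 0 (DL l1)), (closeA_swap b c 0 (DL l2)), E; auto.
Qed.

Lemma dbmapf_length f D : length (dbmapf f D) = length D.
Proof. apply length_map. Qed.
Ltac drep H := match type of H with context [rep ?t] => destruct (rep t) end.

Lemma accepts_equiv (A : RNNA) w : forall q p, accepts A q w -> accepts A (st_act A p q) (w_act p w).
Proof.
  induction w as [|s w IH]; simpl; [intros; apply final_equiv; auto|].
  intros q p [q' [Ht Ha]]. exists (st_act A p q'); split; [apply trans_equiv; auto | apply IH; auto].
Qed.

Lemma collect (A : RNNA) (L : list (atom * st A)) : exists M, forall a q, In (a, q) L ->
  In a M /\ exists l, supports (st_act A) l q /\ incl l M.
Proof.
  induction L as [|[a q] L IH]; [exists []; simpl; tauto|]. destruct IH as [M HM].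
  destruct (proj2 (proj2 (st_nominal A)) q) as [l Hl]. exists (a :: l ++ M).
  intros a' q' [E|Hin].
  - injection E; intros; subst. split; [left; auto|].
    exists l; split; auto. intros z Hz; right; apply in_app_iff; auto.
  - destruct (HM _ _ Hin) as [H1 [l' [H2 H3]]]. split; [right; apply in_app_iff; right; auto|].
    exists l'; split; auto. intros z Hz; right; apply in_app_iff; right; auto.
Qed.

Lemma FS (A : RNNA) w : forall q x, accepts A q w -> In (DFree x) (db [] w) -> supp (st_act A) q x.
Proof.
  pose proof (st_nominal A) as Hn.
  induction w as [|s w IH]; intros q x Hacc Hin; [simpl in Hin; contradiction|].
  destruct Hacc as [q' [Ht Hacc]].
  intros l Hl. destruct (in_dec Nat.eq_dec x l) as [|Hx]; auto. exfalso.
  destruct s as [a|a].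
  - destruct (trans_fin_free A q) as [L HL]. destruct (collect A L) as [M HM].
    destruct (fresh_atom (x :: l ++ M)) as [d Hd]. nin.
    assert (Hpq : st_act A (pswap x d) q = q).
    { apply Hl. intros y Hy. simpl. apply sw_o; intro; subst; auto. }
    pose proof (trans_equiv A (pswap x d) _ _ _ Ht) as Ht'. rewrite Hpq in Ht'. simpl in Ht'.
    apply HL in Ht'. apply HM in Ht'. destruct Ht' as [Hm1 [l' [Hm2 Hm3]]].
    simpl in Hin. destruct Hin as [Hin|Hin].
    + injection Hin; intros; subst. rewrite sw_l in Hm1. auto.
    + pose proof (IH q' x Hacc Hin) as Hs.
      apply (supp_equiv _ Hn (pswap x d)) in Hs. simpl in Hs. rewrite sw_l in Hs.
      apply Hs in Hm2. auto.
  - pose proof (db_Bind a w) as Hc. rewrite Hc in Hin. simpl in Hin.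
    destruct Hin as [Hin|Hin]; [discriminate|]. apply In_closeA in Hin. destruct Hin as [Hin Hxa].
    pose proof (IH q' x Hacc Hin) as Hs.
    destruct (trans_fin_bound A q) as [L HL]. destruct (collect A (map rep L)) as [M HM].
    destruct (fresh_atom (x :: a :: l ++ M)) as [d Hd]. nin.
    assert (Hpq : st_act A (pswap x d) q = q).
    { apply Hl. intros y Hy. simpl. apply sw_o; intro; subst; auto. }
    pose proof (trans_equiv A (pswap x d) _ _ _ Ht) as Ht'. rewrite Hpq in Ht'. simpl in Ht'.
    rewrite (sw_o x d a) in Ht' by auto.
    apply HL in Ht'.
    destruct (rep (abs (st_act A) a (st_act A (pswap x d) q'))) as [at_ qt] eqn:Er.
    assert (Hin2 : In (at_, qt) (map rep L)) by (rewrite <- Er; apply in_map; auto).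
    apply HM in Hin2. destruct Hin2 as [Hm1 [lt [Hm2 Hm3]]].
    apply rep_abs in Er. apply abs_eq_rel in Er; [|apply (proj2 (proj2 Hn))].
    destruct Er as [e [He1 [He2 [He3 [He4 E]]]]].
    apply (supp_equiv _ Hn (pswap x d)) in Hs. simpl in Hs. rewrite sw_l in Hs.
    assert (e <> d) by (intro; subst; auto).
    pose proof (supp_equiv _ Hn (pswap a e) _ _ Hs) as Hs2. simpl in Hs2.
    rewrite sw_o in Hs2 by auto. rewrite <- E in Hs2.
    pose proof (supp_equiv _ Hn (pswap at_ e) _ _ Hs2) as Hs3. simpl in Hs3.
    rewrite act_swap_invol in Hs3 by auto. rewrite sw_o in Hs3 by (auto; intro; subst; auto).
    apply Hs3 in Hm2. auto.
Qed.

Lemma SUB (A : RNNA) (tr : st A -> Lang -> Prop)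
  (HC : forall q z, (exists y, tr q y /\ z = iota_inv y) <-> (exists u, rnna_coalg A q u /\ Fbar tr u z)) :
  forall n q (l : Lang), length (DL l) < n -> tr q l -> exists w, accepts A q w /\ db [] w = DL l.
Proof.
  induction n; intros q l Hn Htr; [lia|].
  destruct (proj1 (HC q (iota_inv l)) (ex_intro _ l (conj Htr eq_refl))) as [u [Hu HF]].
  unfold iota_inv in HF. unfold DL in Hn |- *. destruct (rep l) as [|[a|a] w] eqn:Er; rewrite ?Er in *.
  - destruct Hu as [[-> Hf]|[[a [q' [Ht ->]]]|[a [q' [Ht ->]]]]].
    + exists []; simpl; split; auto.
    + destruct HF as [y [_ H]]; discriminate.
    + simpl in HF. drep HF. destruct HF as [y [_ H]]; discriminate.
  - destruct Hu as [[-> Hf]|[[b [q' [Ht ->]]]|[b [q' [Ht ->]]]]].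
    + simpl in HF; discriminate.
    + destruct HF as [y [Hy H]]. injection H; intros; subst.
      destruct (IHn q' (cls alpha_eq w)) as [w'' [Ha Hd]]; auto.
      { rewrite DL_cls. simpl in Hn; lia. }
      exists (Plain b :: w''). split; [exists q'; auto|]. simpl. f_equal.
      rewrite Hd, DL_cls; auto.
    + simpl in HF. drep HF. destruct HF as [y [_ H]]; discriminate.
  - destruct Hu as [[-> Hf]|[[b [q' [Ht ->]]]|[b [q' [Ht ->]]]]].
    + simpl in HF; discriminate.
    + destruct HF as [y [Hy H]]; discriminate.
    + simpl in HF. destruct (rep (abs (st_act A) b q')) as [b' q''] eqn:Er2.
      destruct HF as [y [Hy H]].
      assert (H' : abs lang_act a (cls alpha_eq w) = abs lang_act b' y) by congruence. clear H; rename H' into H.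
      apply rep_abs in Er2.
      pose proof (@trans_alpha A _ _ _ _ _ Ht Er2) as Ht2.
      apply L1 in H. rewrite DL_cls in H.
      destruct (IHn q'' y) as [w'' [Ha Hd]]; auto.
      { rewrite <- (closeA_length b' 0), <- H, closeA_length, db_length. rewrite db_length in Hn. simpl in Hn. lia. }
      exists (Bind b' :: w''). split; [exists q''; auto|].
      rewrite !db_Bind, Hd, H. reflexivity.
Qed.

Lemma SUP (A : RNNA) (tr : st A -> Lang -> Prop)
  (HC : forall q z, (exists y, tr q y /\ z = iota_inv y) <-> (exists u, rnna_coalg A q u /\ Fbar tr u z)) :
  forall n q w, length w < n -> accepts A q w -> tr q (cls alpha_eq w).
Proof.
  pose proof (st_nominal A) as Hnom.
  induction n; intros q w Hn Hacc; [lia|].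
  destruct w as [|[a|a] w].
  - simpl in Hacc.
    destruct (proj2 (HC q FStar)) as [l [Hl E]].
    { exists FStar; split; [left; auto|reflexivity]. }
    unfold iota_inv in E. destruct (rep l) as [|[a|a] w] eqn:Er; try discriminate.
    replace (cls alpha_eq []) with l; auto. apply L_ext. rewrite DL_cls. unfold DL; rewrite Er; auto.
  - destruct Hacc as [q' [Ht Hacc]].
    assert (IH := IHn q' w ltac:(simpl in Hn; lia) Hacc).
    destruct (proj2 (HC q (FPair a (cls alpha_eq w)))) as [l [Hl E]].
    { exists (FPair a q'); split; [right; left; exists a, q'; auto|]. exists (cls alpha_eq w); auto. }
    unfold iota_inv in E. destruct (rep l) as [|[a0|a0] w0] eqn:Er; try discriminate.
    + assert (a0 = a) by congruence; subst a0.
      assert (E1 : cls alpha_eq w0 = cls alpha_eq w) by congruence.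
      replace (cls alpha_eq (Plain a :: w)) with l; auto. apply L_ext. rewrite DL_cls.
      unfold DL; rewrite Er. simpl. f_equal. apply (f_equal DL) in E1. rewrite !DL_cls in E1; auto.
  - destruct Hacc as [q' [Ht Hacc]].
    destruct (rep (abs (st_act A) a q')) as [b q''] eqn:Er.
    pose proof Er as Er0. apply rep_abs in Er.
    pose proof Er as Er'.
    apply abs_eq_rel in Er; [|apply (proj2 (proj2 Hnom))].
    destruct Er as [c [Hcb [Hca [Hc2 [Hc1 E]]]]].
    assert (Eq : q'' = st_act A (pswap b c) (st_act A (pswap a c) q')).
    { rewrite <- E, act_swap_invol; auto. }
    set (w' := w_act (pswap b c) (w_act (pswap a c) w)).
    assert (Ha' : accepts A q'' w') by (rewrite Eq; apply accepts_equiv, accepts_equiv; auto).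
    assert (IH := IHn q'' w' ltac:(unfold w'; rewrite !w_act_f, !w_f_length; simpl in Hn; lia) Ha').
    destruct (proj2 (HC q (FAbs (abs lang_act b (cls alpha_eq w'))))) as [l [Hl E2]].
    { exists (FAbs (abs (st_act A) a q')); split; [right; right; exists a, q'; auto|].
      simpl. rewrite Er0. exists (cls alpha_eq w'); split; auto. }
    unfold iota_inv in E2. destruct (rep l) as [|[a0|a0] w0] eqn:El; try discriminate.
    assert (Habs : abs lang_act b (cls alpha_eq w') = abs lang_act a0 (cls alpha_eq w0)) by congruence.
    apply L1 in Habs. rewrite !DL_cls in Habs.
    replace (cls alpha_eq (Bind a :: w)) with l; auto. apply L_ext. rewrite DL_cls.
    unfold DL; rewrite El. rewrite !db_Bind, <- Habs. f_equal. symmetry.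
    assert (Hbq : a <> b -> ~ supp (st_act A) q' b).
    { intros Hab Hs. pose proof (supp_equiv _ Hnom (pswap a c) _ _ Hs) as H1; simpl in H1.
      rewrite sw_o in H1 by auto. rewrite <- E in H1.
      pose proof (supp_equiv _ Hnom (pswap b c) _ _ H1) as H2; simpl in H2.
      rewrite act_swap_invol, sw_l in H2 by auto. apply Hc2; auto. }
    unfold w'. rewrite !w_act_f, w_f_comp.
    pose proof (db_equiv (fun x => swap_fun b c (swap_fun a c x)) [] w) as Hq. simpl in Hq.
    simpl. rewrite Hq.
    2: { intros x y H; apply sw_inj in H; apply sw_inj in H; auto. }
    apply closeA_map. intros x Hx. pose proof (FS A w q' x Hacc Hx) as Hs. split.
    + intros ->. rewrite sw_l, sw_r; auto.
    + intros Hxa. assert (x <> c) by (intro; subst; apply Hc1; auto).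
      assert (x <> b).
      { intro; subst x. destruct (Nat.eq_dec a b); [subst; auto|]. apply (Hbq n0); auto. }
      rewrite (sw_o a c x), (sw_o b c x); auto.
Qed.

Theorem theorem3p21 (A : RNNA) (tr : st A -> Lang -> Prop)
  (Htr_kl : kl_morphism (st_act A) lang_act tr)
  (Htr_coalg : forall q, kcomp (J iota_inv) tr q = kcomp (Fbar tr) (rnna_coalg A) q) :
  forall q : st A, tr q = bar_language A q.
Proof.
  assert (HC : forall q z, (exists y, tr q y /\ z = iota_inv y) <->
                          (exists u, rnna_coalg A q u /\ Fbar tr u z)).
  { intros q z. pose proof (f_equal (fun f => f z) (Htr_coalg q)) as H.
    unfold kcomp, J in H; simpl in H. rewrite H. tauto. }
  intros q. apply functional_extensionality; intro l. apply propositional_extensionality.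
  split.
  - intros Ht. destruct (SUB A tr HC (S (length (DL l))) q l ltac:(lia) Ht) as [w [Ha Hd]].
    exists w; split; auto. apply L_ext. rewrite DL_cls; auto.
  - intros [w [Ha ->]]. apply (SUP A tr HC (S (length w))); auto.
Qed.
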